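(* Let $F$ be a sensori-computational device and $N\subseteq Y(F)$, and suppose every nonempty string $s_1s_2\cdots s_k\in\mathcal{L}(F)$ has $s_1\in Y(F)\setminus N$. If there exists a sensori-computational device that output simulates $F$ modulo the $N$-pump $P_N$ (with $L=\mathcal{L}(F)$, $\Sigma=Y(F)$), then there exists a sensori-computational device that output simulates $F$ modulo the $N$-shrink $\pi_N$ (with $L=\mathcal{L}(F)$, $\Sigma=Y(F)$).
   Context: A sensori-computational device is a 6-tuple $F=(V,V_0,Y,\tau,C,c)$ where $V$ is a non-empty finite set of states, $V_0\subseteq V$ a non-empty set of initial states, $Y=Y(F)$ a finite set of observations, $\tau:V\times V\to\mathcal{P}(Y)$, $C$ a set of outputs, $c:V\to\mathcal{P}(C)\setminus\{\emptyset\}$. A string $y_1\cdots y_n$ reaches $w$ from $v$ if there are states $w_0=v,\dots,w_n=w$ with $y_i\in\tau(w_{i-1},w_i)$; $\mathcal{R}_F(s)$ is the set of states reached by $s$ from some initial state; $\mathcal{L}(F)=\{s\in Y^*:\mathcal{R}_F(s)\ne\emptyset\}$; $\mathcal{C}_F(s)=\bigcup_{v\in\mathcal{R}_F(s)}c(v)$. For a relation $R\subseteq A\times B$ between sets of strings, $F'$ output simulates $F$ modulo $R$ if for every $s\in\mathcal{L}(F)$: (1) some $t\in\mathcal{L}(F')$ has $s\,R\,t$; (2) every $t\in B$ with $s\,R\,t$ satisfies $t\in\mathcal{L}(F')$ and $\mathcal{C}_F(s)\supseteq\mathcal{C}_{F'}(t)$. For a set $\Sigma$, $L\subseteq\Sigma^*$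 and $N\subseteq\Sigma$: the $N$-shrink is the function $\pi_N:L\to(\Sigma\setminus N)^*$ deleting every occurrence of symbols of $N$ from a string (so $\pi_N(\epsilon)=\epsilon$). The $N$-pump is the relation $P_N\subseteq L\times\Sigma^*$ defined as the smallest relation such that $\epsilon\,P_N\,\epsilon$, $s\,P_N\,s$ for every $s\in L$, and whenever $s\,P_N\,t_1\cdots t_\ell$, then $s\,P_N\,t_1\cdots t_k\,b\,t_{k+1}\cdots t_\ell$ for every $b\in N$ and $k\in\{1,\dots,\ell\}$. *)

(* Defs.v *)
From mathcomp Require Import all_boot.
Set Implicit Arguments. Unset Strict Implicit. Unset Printing Implicit Defensive.

(* Observations live in an ambient eqType Y; a device's observation set
   Y(F) is the finite set [dobs F] (a seq used as a finite set). *)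
Record device (Y : eqType) (C : Type) := Device {
  dst : finType;
  dinit : {set dst};
  dobs : seq Y;
  dtau : dst -> dst -> pred Y;
  dout : dst -> C -> Prop;
  dinit_nonempty : dinit != set0;
  dtau_obs : forall v w y, dtau v w y -> y \in dobs;
  dout_nonempty : forall v, exists o, dout v o
}.

Section Dev.
Variables (Y : eqType) (C : Type).
Implicit Types (F : device Y C).

Fixpoint reaches F (v : dst F) (s : seq Y) (w : dst F) : bool :=
  match s with
  | [::] => w == v
  | y :: s' => [exists u, dtau v u y && reaches u s' w]
  end.

Definition reached F (s : seq Y) : {set dst F} :=
  [set w | [exists v in dinit F, reaches v s w]].

Definition inL F (s : seq Y) : Prop := reached F s != set0.

Definition outs F (s : seq Y) (o : C) : Prop :=
  exists2 v, v \in reached F s & dout v o.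

(* F' output simulates F modulo R subset A x B, where B is given as a
   predicate on strings. *)
Definition output_simulates F F' (B : seq Y -> Prop)
    (R : seq Y -> seq Y -> Prop) : Prop :=
  forall s, inL F s ->
    (exists t, inL F' t /\ R s t) /\
    (forall t, B t -> R s t ->
       inL F' t /\ (forall o, outs F' t o -> outs F s o)).
End Dev.

Section Ops.
Variable (Y : eqType).

Definition shrink (N : seq Y) (s : seq Y) : seq Y :=
  [seq y <- s | y \notin N].

Inductive pump (L : seq Y -> Prop) (N : seq Y) : seq Y -> seq Y -> Prop :=
| pump_eps : pump L N [::] [::]
| pump_refl s : L s -> pump L N s s
| pump_ins s t b k : pump L N s t -> b \in N -> 0 < k <= size t ->
    pump L N s (take k t ++ b :: drop k t).
End Ops.

(* Main.v *)
Require Import Defs.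
From mathcomp Require Import all_boot.

Section S.
Variables (Y : eqType) (C : Type).

Lemma reaches_cat (G : device Y C) (v : dst G) x y (u : dst G) :
  reaches v (x ++ y) u = [exists m, reaches v x m && reaches m y u].
Proof.
elim: x v => [|a x IH] v /=.
  apply/idP/existsP => [H|[m /andP[/eqP -> H]]] //; by exists v; rewrite eqxx.
apply/existsP/existsP => [[m /andP[Ht]]|[m /andP[/existsP[m' /andP[Ht Hr]] Hr2]]].
  rewrite IH => /existsP[m' /andP[H1 H2]]. exists m'; rewrite H2 andbT.
  apply/existsP; exists m; by rewrite Ht.
exists m'; rewrite Ht IH /=; apply/existsP; exists m; by rewrite Hr.
Qed.

Lemma reaches_obs (G : device Y C) s : forall (v u : dst G),
  reaches v s u -> all (mem (dobs G)) s.
Proof.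
elim: s => [|a s IH] v u //= /existsP[m /andP[Ht Hr]].
apply/andP; split; [exact: dtau_obs Ht | exact: IH Hr].
Qed.
Arguments reaches_obs {G s v u}.

Lemma inL_obs (G : device Y C) s : inL G s -> all (mem (dobs G)) s.
Proof.
move=> /set0Pn[u]; rewrite inE => /existsP[v /andP[_ Hr]]; exact: reaches_obs Hr.
Qed.
Arguments inL_obs {G s}.

Inductive Ins (N : seq Y) (s : seq Y) : seq Y -> Prop :=
| Ins_refl : Ins N s s
| Ins_step t b k : Ins N s t -> b \in N -> 0 < k <= size t ->
    Ins N s (take k t ++ b :: drop k t).

Lemma Ins_pump (L : seq Y -> Prop) N s w : L s -> Ins N s w -> pump L N s w.
Proof.
move=> Ls; elim => [|t b k _ IH Hb Hk]; [exact: pump_refl | exact: pump_ins IH Hb Hk].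
Qed.
Arguments Ins_pump {L N s w}.

Lemma Ins_word N s t u k : Ins N s t -> all (mem N) u -> 0 < k <= size t ->
  Ins N s (take k t ++ u ++ drop k t).
Proof.
move=> Hst; elim: u => [|b u IH] /=; first by rewrite cat_take_drop.
move=> /andP[Hb Hu] Hk. have Ht1 := IH Hu Hk.
have Hsz: size (take k t) = k by rewrite size_takel //; case/andP: Hk.
have := @Ins_step N s _ b k Ht1 Hb.
rewrite take_size_cat // drop_size_cat //; apply.
rewrite size_cat Hsz leq_addr andbT; by case/andP: Hk.
Qed.
Arguments Ins_word {N s t u k}.

Lemma Ins_prefix N r r' p : Ins N r r' -> Ins N (p ++ r) (p ++ r').
Proof.
elim => [|t b k _ IH Hb Hk]; first exact: Ins_refl.
have := @Ins_step N (p ++ r) (p ++ t) b (size p + k) IH Hb.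
rewrite take_cat drop_cat (ltnNge (size p + k)) leq_addr /= addKn catA; apply.
rewrite size_cat leq_add2l; case/andP: Hk => H1 H2; rewrite H2 andbT.
exact: leq_trans H1 (leq_addl _ _).
Qed.

Lemma Ins_all N (P : pred Y) s w : Ins N s w -> all P s -> all P N -> all P w.
Proof.
elim => // t b k _ IH Hb _ Hs HN. have Ht := IH Hs HN.
rewrite -(cat_take_drop k t) all_cat in Ht. case/andP: Ht => H1 H2.
by rewrite all_cat /= H1 H2 (allP HN b Hb).
Qed.
Arguments Ins_all {N P s w}.

Definition rho (G : device Y C) (x : seq Y) : {ffun dst G * dst G -> bool} :=
  [ffun vu => reaches vu.1 x vu.2].

Definition mulb (G : device Y C) (f : {ffun dst G * dst G -> bool}) b :
  {ffun dst G * dst G -> bool} :=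
  [ffun vu : dst G * dst G => [exists m, f (vu.1, m) && dtau m vu.2 b]].
Arguments mulb {G} f b.

Lemma rho_rcons G x b : rho G (rcons x b) = mulb (rho G x) b.
Proof.
apply/ffunP => -[v u]; rewrite !ffunE /= -cats1 reaches_cat.
apply: eq_existsb => m; rewrite ffunE /=; congr (_ && _).
apply/existsP/idP => [[m' /andP[H /eqP->]]|H] //; by exists u; rewrite H eqxx.
Qed.

Definition edge G (N : seq Y) : rel {ffun dst G * dst G -> bool} :=
  fun f g => has (fun b => g == mulb f b) N.

Lemma conn1 G N x y : all (mem N) y -> connect (edge G N) (rho G x) (rho G (x ++ y)).
Proof.
elim: y x => [|b y IH] x /=; first by rewrite cats0 connect0.
case/andP=> Hb Hy. have := IH (rcons x b) Hy; rewrite cat_rcons; apply: connect_trans.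
apply: connect1; apply/hasP; exists b => //; by rewrite rho_rcons.
Qed.
Arguments conn1 {G N} x {y}.

Lemma conn2 G N x g : connect (edge G N) (rho G x) g ->
  exists2 y, all (mem N) y & g = rho G (x ++ y).
Proof.
move/connectP => [p Hp ->]. elim: p x Hp => [|h p IH] x /=.
  by move=> _; exists [::]; rewrite ?cats0.
case/andP => /hasP[b Hb /eqP Hh] Hp. rewrite Hh -rho_rcons in Hp *.
have [y Hy Hl] := IH _ Hp. exists (b :: y); first by rewrite /= Hb Hy.
by rewrite Hl cat_rcons.
Qed.
Arguments conn2 {G N x g}.

Definition eqv (G : device Y C) (x x' : seq Y) := forall v u : dst G, reaches v x u = reaches v x' u.

Lemma zexists (G : device Y C) (N : seq Y) : exists2 z, all (mem N) z &
  forall b, b \in N -> exists2 y, all (mem N) y & eqv G (z ++ b :: y) z.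
Proof.
pose e := edge G N. pose id0 := rho G [::].
pose F0 := fun g => #|[set h | connect e g h]|.
case: (@arg_minnP _ id0 (fun g => connect e id0 g) F0 (connect0 _ _)) => g0 Hc Hmin.
have [z Hz Hg0] := conn2 Hc. exists z => // b Hb.
have H1: connect e g0 (rho G (rcons z b)).
  by rewrite Hg0 -cats1; apply: conn1; rewrite /= Hb.
have Hsub: [set h | connect e (rho G (rcons z b)) h] \subset [set h | connect e g0 h].
  by apply/subsetP => h; rewrite !inE; apply: connect_trans.
have Hle := Hmin _ (connect_trans Hc H1).
have Heq: [set h | connect e (rho G (rcons z b)) h] = [set h | connect e g0 h].
  by apply/eqP; rewrite eqEcard Hsub Hle.
have: g0 \in [set h | connect e (rho G (rcons z b)) h] by rewrite Heq inE connect0.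
rewrite inE => /conn2 [y Hy Hg]. exists y => //.
have E: rho G (z ++ b :: y) = rho G z by rewrite -cat_rcons -Hg Hg0.
move=> v u; have := congr1 (fun f : {ffun dst G * dst G -> bool} => f (v, u)) E; by rewrite !ffunE.
Qed.

Definition expand (z t : seq Y) := flatten [seq a :: z | a <- t].

Lemma Hmain (G : device Y C) (N z : seq Y) (Hz : all (mem N) z)
  (Hb : forall b, b \in N -> exists2 y, all (mem N) y & eqv G (z ++ b :: y) z) r :
  exists w, (forall p, p != [::] -> Ins N (p ++ r) (p ++ w)) /\
            eqv G (z ++ w) (z ++ expand z (shrink N r)).
Proof.
elim: r => [|c r [w [Hi He]]].
  exists [::]; split => // p _; exact: Ins_refl.
have Hsz p : 0 < size (rcons p c) <= size (rcons p c ++ w).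
  by rewrite size_cat size_rcons leq_addr.
have Hne p : rcons p c != [::] by case: p.
rewrite /shrink in He *.
case Hc: (c \in N).
- have [y Hy Hzy] := Hb c Hc. exists (c :: y ++ w); split.
    move=> p _. have H2 := Ins_word (Hi (rcons p c) (Hne p)) Hy (Hsz p).
    by rewrite take_size_cat // drop_size_cat // !cat_rcons in H2.
  rewrite /= Hc /= => v u. rewrite -He.
  have -> : z ++ c :: y ++ w = (z ++ c :: y) ++ w by rewrite -catA.
  rewrite !reaches_cat; apply: eq_existsb => m; by rewrite Hzy.
- exists (c :: z ++ w); split.
    move=> p _. have H2 := Ins_word (Hi (rcons p c) (Hne p)) Hz (Hsz p).
    by rewrite take_size_cat // drop_size_cat // !cat_rcons in H2.
  rewrite /= Hc /= => v u. rewrite -!cat_rcons !reaches_cat.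
  apply: eq_existsb => m; by rewrite He.
Qed.

Lemma tau_obs (G : device Y C) (N z : seq Y) : forall (v u : dst G) (a : Y),
  (fun v u a => (a \notin N) && reaches v (a :: z) u) v u a -> a \in dobs G.
Proof. move=> v u a /andP[_ /existsP[m /andP[Ht _]]]; exact: dtau_obs Ht. Qed.

Definition mkdev (G : device Y C) N z : device Y C :=
  @Device Y C (dst G) (dinit G) (dobs G)
    (fun v u a => (a \notin N) && reaches v (a :: z) u) (@dout Y C G)
    (@dinit_nonempty Y C G) (@tau_obs G N z) (@dout_nonempty Y C G).

Lemma reaches_mk G N z t (v u : dst G) : all (fun a => a \notin N) t ->
  @reaches Y C (mkdev G N z) v t u = reaches v (expand z t) u.
Proof.
elim: t v => [|a t IH] v //= /andP[Ha Ht].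
rewrite Ha /=.
transitivity [exists m, reaches v (a :: z) m && reaches m (expand z t) u];
  last by rewrite -reaches_cat.
apply: eq_existsb => m; by rewrite IH.
Qed.

Lemma reached_mk G N z t : all (fun a => a \notin N) t ->
  reached (mkdev G N z) t = reached G (expand z t).
Proof.
move=> Ht; apply/setP => u; rewrite !inE; apply: eq_existsb => v; by rewrite reaches_mk.
Qed.

Lemma reached_eqv G x x' : eqv G x x' -> reached G x = reached G x'.
Proof. move=> H; apply/setP => u; rewrite !inE; apply: eq_existsb => v; by rewrite H. Qed.

End S.
Arguments Ins {Y} N s _.
Arguments Ins_refl {Y N s}.
Arguments eqv {Y C} G x x'.
Arguments expand {Y} z t.
Arguments mkdev {Y C} G N z.
Arguments zexists {Y C} G N.
Arguments Hmain {Y C G N z} Hz Hb r.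
Arguments Ins_word {Y N s t u k}.
Arguments Ins_pump {Y L N s w}.
Arguments Ins_all {Y N P s w}.
Arguments inL_obs {Y C G s}.
Arguments reached_mk {Y C G N} z {t}.
Arguments reached_eqv {Y C G x x'}.

Theorem lemma5 (Y : eqType) (C : Type) (F : device Y C) (N : seq Y) :
  {subset N <= dobs F} ->
  (forall (y : Y) (s : seq Y), inL F (y :: s) ->
     y \in dobs F /\ y \notin N) ->
  (exists F' : device Y C,
     output_simulates F F'
       (fun t => all (mem (dobs F)) t)
       (pump (inL F) N)) ->
  exists F' : device Y C,
    output_simulates F F'
      (fun t => all (fun y => (y \in dobs F) && (y \notin N)) t)
      (fun s t => inL F s /\ t = shrink N s).
Proof.
move=> HN Hhead [F' HF'].
have [z Hz Hzb] := zexists F' N.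
exists (mkdev F' N z) => s Hs.
have Hsh: all (fun a => a \notin N) (shrink N s) by apply: filter_all.
have [W [HW HWe]]: exists W, Ins N s W /\ eqv F' W (expand z (shrink N s)).
  case: s Hs {Hsh} => [|a r] Hs.
    by exists [::]; split; [exact: Ins_refl | ].
  have [_ Ha] := Hhead a r Hs. have [w [Hi He]] := Hmain Hz Hzb r.
  exists (a :: z ++ w); split.
    have H2 := Ins_word (k:=1) (Hi [:: a] isT) Hz isT. by rewrite /= take0 drop0 in H2.
  rewrite /shrink /= Ha /= => v u /=. rewrite /shrink in He.
  apply: eq_existsb => m; by rewrite He.
have HpW: pump (inL F) N s W := Ins_pump Hs HW.
have HBW: all (mem (dobs F)) W.
  apply: (Ins_all HW (inL_obs Hs)); apply/allP => y Hy; exact: HN.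
have [HLW HoW] := (HF' s Hs).2 W HBW HpW.
have Hr: reached (mkdev F' N z) (shrink N s) = reached F' W.
  by rewrite reached_mk // (reached_eqv HWe).
split.
  exists (shrink N s); split => //. by rewrite /inL Hr.
move=> t _ [_ ->]. split; first by rewrite /inL Hr.
move=> o [v Hv Ho]; apply: HoW; exists v => //; by rewrite -Hr.
Qed.
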